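(* Let $p,m,n\ge 1$, $M\ge 1$ be integers, let $N$ be the number of workers, and let $\mathbb{F}$ be a sufficiently large finite field. For private coded matrix multiplication (as described in the context) there exist linear coding schemes that achieve a recovery threshold of $2R(p,m,n)$. For private and secure distributed matrix multiplication there exist linear coding schemes that achieve a recovery threshold of $2R(p,m,n)+1$.
   Context: Private coded matrix multiplication: given $A\in\mathbb{F}^{s\times t}$ and a list $\boldsymbol{B}=(B^{(1)},\dots,B^{(M)})$ with $B^{(\ell)}\in\mathbb{F}^{s\times r}$, and a request index $D\in[M]$, the master wants $A^\intercal B^{(D)}$. Assume $p\mid s$, $m\mid t$, $n\mid r$; $A$ is partitioned into a $p$-by-$m$ grid of equal-size blocks and each $B^{(\ell)}$ into a $p$-by-$n$ grid of equal-size blocks. There are $N$ workers. The master sends worker $i$ a (possibly random) query $Q_i$ depending on $D$, together with a coded matrix $\tilde A_i\in\mathbb{F}^{\frac{s}{p}\times\frac{t}{m}}$ that is a linear combination of the blocks of $A$ (possibly padded with i.i.d. uniformly random key matrices of the same size). Worker $i$ encodes $\boldsymbol{B}$ into $\tilde B_i\in\mathbb{F}^{\frac{s}{p}\times\frac{r}{n}}$, a linear combination of the blocks of the $B^{(\ell)}$ with coefficients determined by $Q_i$, computes $\tilde A_i^\intercal\tilde B_i$ and returns it. The master decodes by linear combinations of received results, with coefficients that may depend on $D$ and the queries. A scheme achieves recovery threshold $K$ if the master can recover $A^\intercal B^{(D)}$ from the results of any subset of $K$ workers. Privacy requirement: $I(D;Q_i,\tilde A_i,\boldsymbol{B})=0$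 for every $i\in[N]$, where $A,\boldsymbol{B},D$ are uniformly random. Private and secure: in addition $I(\tilde A_i;A)=0$ for every $i\in[N]$ when $A$ is uniformly random. $R(p,m,n)$ denotes the bilinear complexity (tensor rank of the matrix multiplication tensor) of multiplying an $m$-by-$p$ matrix by a $p$-by-$n$ matrix. *)

(* Defs.v *)
From HB Require Import structures.
From Stdlib Require Import Rdefinitions Rpower.
From mathcomp Require Import all_boot all_order all_algebra all_field.
From mathcomp Require Import Rstruct.

Set Implicit Arguments.
Unset Strict Implicit.
Unset Printing Implicit Defensive.

Import Order.TTheory GRing.Theory Num.Theory.

Lemma blk_idx_lt (p a : nat) (j : 'I_p) (x : 'I_a) : (j * a + x < p * a)%N.
Proof.
have hj := ltn_ord j; have hx := ltn_ord x.
apply: (@leq_trans (j.+1 * a)); first by rewrite mulSn addnC ltn_add2r.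
by rewrite leq_mul2r hj orbT.
Qed.

Definition blk_idx (p a : nat) (j : 'I_p) (x : 'I_a) : 'I_(p * a) :=
  Ordinal (blk_idx_lt j x).

Definition block {F : Type} (p m a b : nat) (X : 'M[F]_(p * a, m * b))
  (j : 'I_p) (k : 'I_m) : 'M[F]_(a, b) :=
  \matrix_(x < a, y < b) X (blk_idx j x) (blk_idx k y).

Local Open Scope ring_scope.

(* Bilinear complexity R(p,m,n): tensor rank of the matrix multiplication   *)
(* tensor for (m x p) times (p x n) matrices, over the field F.             *)

(* <m,p,n> tensor: coefficient of X_{i j} Y_{j' l} in entry (k,l') of X*Y *)
Definition matmul_tensor (F : fieldType) (p m n : nat)
  (i : 'I_m) (j j' : 'I_p) (l : 'I_n) (k : 'I_m) (l' : 'I_n) : F :=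
  ((i == k) && (j == j') && (l == l'))%:R.

Definition has_rank_decomp (F : fieldType) (p m n r : nat) : Prop :=
  exists (u : 'I_r -> 'I_m -> 'I_p -> F) (v : 'I_r -> 'I_p -> 'I_n -> F)
         (w : 'I_r -> 'I_m -> 'I_n -> F),
    forall i j j' l k l',
      @matmul_tensor F p m n i j j' l k l' =
      \sum_(h < r) u h i j * v h j' l * w h k l'.

Definition is_bilinear_complexity (F : fieldType) (p m n R : nat) : Prop :=
  has_rank_decomp F p m n R /\
  forall r, has_rank_decomp F p m n r -> (R <= r)%N.

Definition uprob (Om : finType) (E : pred Om) : R :=
  (#|E|%:R / #|Om|%:R)%R.

Definition mutual_info (Om : finType) (X Y : finType)
  (f : Om -> X) (g : Om -> Y) : R :=
  \sum_(x : X) \sum_(y : Y)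
    let pxy := uprob [pred w | (f w == x) && (g w == y)] in
    let px := uprob [pred w | f w == x] in
    let py := uprob [pred w | g w == y] in
    if pxy == 0 then 0 else pxy * ln (pxy / (px * py)).

(*   F      : the field; block sizes a = s/p, b = t/m, c = r/n              *)
(*   D      : 'I_M, the requested index                                      *)
(*   Om     : the master's private randomness (uniform on a finite set)     *)
(*   Z      : T i.i.d. uniform key matrices of size a x b                    *)
(*   qry i D w        : query Q_i sent to worker i (values in type Qt)      *)
(*   gam Q l j k      : coefficient of block B^(l)_{jk} in B~_i, as a        *)
(*                      function of the query Q = Q_i only                   *)
(*   dec S D Qs i k l : decoding coefficient of the result of worker i ∈ S  *)
(*                      for the (k,l) block of A^T B^(D); depends on the     *)
(*                      responding set S, on D and on the queries Qs.        *)

Section Scheme.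

Variables (F : finFieldType) (p m n M N a b c : nat).
Variables (Om : finType) (T : nat) (Qt : finType).
Variable qry : 'I_N -> 'I_M -> Om -> Qt.
Variable alpha : 'I_N -> 'I_M -> Om -> 'I_p -> 'I_m -> F.
Variable beta : 'I_N -> 'I_M -> Om -> 'I_T -> F.
Variable gam : Qt -> 'I_M -> 'I_p -> 'I_n -> F.
Variable dec : {set 'I_N} -> 'I_M -> ('I_N -> Qt) -> 'I_N -> 'I_m -> 'I_n -> F.

Definition Amat := 'M[F]_(p * a, m * b).
Definition Bmat := 'M[F]_(p * a, n * c).
Definition Keys := {ffun 'I_T -> 'M[F]_(a, b)}.
Definition Blist := {ffun 'I_M -> Bmat}.

Definition codedA (i : 'I_N) (d : 'I_M) (w : Om) (Z : Keys) (A : Amat)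
  : 'M[F]_(a, b) :=
  \sum_(j < p) \sum_(k < m) alpha i d w j k *: block A j k
  + \sum_(z < T) beta i d w z *: Z z.

Definition codedB (q : Qt) (B : Blist) : 'M[F]_(a, c) :=
  \sum_(l < M) \sum_(j < p) \sum_(k < n) gam q l j k *: block (B l) j k.

Definition result (i : 'I_N) (d : 'I_M) (w : Om) (Z : Keys) (A : Amat)
  (B : Blist) : 'M[F]_(b, c) :=
  (codedA i d w Z A)^T *m codedB (qry i d w) B.

Definition achieves_threshold (K : nat) : Prop :=
  forall (S : {set 'I_N}), #|S| = K ->
  forall (d : 'I_M) (w : Om) (Z : Keys) (A : Amat) (B : Blist)
         (k : 'I_m) (l : 'I_n),
    block (A^T *m B d) k l =
    \sum_(i in S) dec S d (fun i' => qry i' d w) i k l *: result i d w Z A B.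

(* the sample space: D, master randomness, keys, A, B all independent and
   uniform *)
Definition Sample := ((('I_M * Om) * Keys) * Amat * Blist)%type.

Definition sD (s : Sample) : 'I_M := s.1.1.1.1.
Definition sW (s : Sample) : Om := s.1.1.1.2.
Definition sZ (s : Sample) : Keys := s.1.1.2.
Definition sA (s : Sample) : Amat := s.1.2.
Definition sB (s : Sample) : Blist := s.2.

Definition worker_view (i : 'I_N) (s : Sample) : Qt * 'M[F]_(a, b) * Blist :=
  (qry i (sD s) (sW s), codedA i (sD s) (sW s) (sZ s) (sA s), sB s).

Definition is_private : Prop :=
  forall i : 'I_N, mutual_info sD (worker_view i) = 0.

Definition is_secure : Prop :=
  forall i : 'I_N,
    mutual_info (fun s => codedA i (sD s) (sW s) (sZ s) (sA s)) sA = 0.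

End Scheme.

Definition exists_private_scheme (F : finFieldType) (p m n M N a b c K : nat)
  : Prop :=
  exists (Om : finType) (T : nat) (Qt : finType)
    (qry : 'I_N -> 'I_M -> Om -> Qt)
    (alpha : 'I_N -> 'I_M -> Om -> 'I_p -> 'I_m -> F)
    (beta : 'I_N -> 'I_M -> Om -> 'I_T -> F)
    (gam : Qt -> 'I_M -> 'I_p -> 'I_n -> F)
    (dec : {set 'I_N} -> 'I_M -> ('I_N -> Qt) -> 'I_N -> 'I_m -> 'I_n -> F),
    (0 < #|Om|)%N /\
    achieves_threshold a b c qry alpha beta gam dec K /\
    is_private n a b c qry alpha beta.

Definition exists_private_secure_scheme (F : finFieldType)
  (p m n M N a b c K : nat) : Prop :=
  exists (Om : finType) (T : nat) (Qt : finType)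
    (qry : 'I_N -> 'I_M -> Om -> Qt)
    (alpha : 'I_N -> 'I_M -> Om -> 'I_p -> 'I_m -> F)
    (beta : 'I_N -> 'I_M -> Om -> 'I_T -> F)
    (gam : Qt -> 'I_M -> 'I_p -> 'I_n -> F)
    (dec : {set 'I_N} -> 'I_M -> ('I_N -> Qt) -> 'I_N -> 'I_m -> 'I_n -> F),
    (0 < #|Om|)%N /\
    achieves_threshold a b c qry alpha beta gam dec K /\
    is_private n a b c qry alpha beta /\
    is_secure n a b c alpha beta.

(* Main.v *)
Require Import Defs.
From Stdlib Require Import Rdefinitions Raxioms RIneq Rpower.
From mathcomp Require Import all_boot all_order all_algebra all_field.
From mathcomp Require Import Rstruct zify ring lra fingroup perm.
Set Implicit Arguments. Unset Strict Implicit. Unset Printing Implicit Defensive.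
Import Order.TTheory GRing.Theory Num.Theory.
Local Open Scope ring_scope.


Lemma ln1' : ln (1 : R) = 0.
Proof. exact: ln_1. Qed.

Lemma indep_mi0 (Om X Y : finType) (f : Om -> X) (g : Om -> Y) :
  (forall x y, (#|[pred w | (f w == x) && (g w == y)]| * #|Om| =
                #|[pred w | f w == x]| * #|[pred w | g w == y]|)%N) ->
  mutual_info f g = 0.
Proof.
move=> H; rewrite /mutual_info big1 // => x _; rewrite big1 // => y _ /=.
case: ifP => // /negbT nz.
have E : uprob [pred w | (f w == x) && (g w == y)] =
         uprob [pred w | f w == x] * uprob [pred w | g w == y].
  rewrite /uprob mulrACA -invfM -!natrM -H natrM.
  have [->|Om0] := eqVneq #|Om| 0%N; first by rewrite !mulr0 !invr0 !mulr0.
  by rewrite natrM invfM mulrA mulfK // pnatr_eq0.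
have L (a0 b0 c0 : R) : a0 = b0 * c0 -> a0 != 0 -> a0 * ln (a0 / (b0 * c0)) = 0.
  move=> -> h; rewrite /Rdiv Rinv_r; first by rewrite ln1' mulr0.
  exact/eqP.
exact: L E nz.
Qed.

Lemma card_pred_sum (Om X : finType) (f : Om -> X) (P : pred Om) :
  #|P| = (\sum_(x : X) #|[pred w | P w && (f w == x)]|)%N.
Proof.
rewrite -sum1_card (partition_big f xpredT) //=.
by apply: eq_bigr => x _; rewrite -sum1_card.
Qed.

Lemma perm_indep (Om X Y : finType) (f : Om -> X) (g : Om -> Y) :
  (forall x x', exists phi : Om -> Om, injective phi /\
      forall s, g (phi s) = g s /\ (f (phi s) == x') = (f s == x)) ->
  mutual_info f g = 0.
Proof.
move=> Hp; apply: indep_mi0 => x y.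
pose c x y := #|[pred w | (f w == x) && (g w == y)]|.
have Hc x1 x2 y1 : c x1 y1 = c x2 y1.
  have [phi [inj Hphi]] := Hp x1 x2.
  pose A := [set w | (f w == x2) && (g w == y1)].
  transitivity #|phi @^-1: A|.
    by apply: eq_card => w; rewrite !inE /= (Hphi w).1 (Hphi w).2.
  by rewrite card_preimset //; apply: eq_card => w; rewrite !inE.
have Ex x1 : #|[pred w | f w == x1]| = (\sum_y1 c x y1)%N.
  rewrite (card_pred_sum g); apply: eq_bigr => y1 _; rewrite (Hc x x1).
  by apply: eq_card.
have Hy : #|[pred w | g w == y]| = (#|X| * c x y)%N.
  rewrite (card_pred_sum f) -sum_nat_const; apply: eq_bigr => x1 _.
  rewrite (Hc x x1) /c; apply: eq_card => w; by rewrite !inE andbC.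
have HO : #|Om| = (#|X| * \sum_y1 c x y1)%N.
  rewrite (card_pred_sum f) -sum_nat_const; apply: eq_bigr => x1 _.
  by rewrite -(Ex x1); apply: eq_card => w; rewrite !inE.
rewrite Hy HO (Ex x) -/(c x y).
set S := (\sum_y1 c x y1)%N; set C := c x y; lia.
Qed.


Section Lag.
Variable F : fieldType.

Definition lagp (I : finType) (f : I -> F) (S : {set I}) (i : I) : {poly F} :=
  (\prod_(j in S :\ i) (f i - f j))^-1 *: \prod_(j in S :\ i) ('X - (f j)%:P).

Lemma size_prodX (I : finType) (f : I -> F) (A : {set I}) :
  size (\prod_(j in A) ('X - (f j)%:P)) = #|A|.+1.
Proof. by rewrite -big_enum size_prod_XsubC cardE. Qed.

Lemma lagp_size (I : finType) (f : I -> F) (S : {set I}) i :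
  i \in S -> (size (lagp f S i) <= #|S|)%N.
Proof.
move=> iS; apply: leq_trans (size_scale_leq _ _) _.
by rewrite size_prodX (cardsD1 i S) iS.
Qed.

Lemma lagp_eval (I : finType) (f : I -> F) (S : {set I}) i k :
  {in S &, injective f} -> i \in S -> k \in S ->
  (lagp f S i).[f k] = (k == i)%:R.
Proof.
move=> inj iS kS; rewrite /lagp hornerZ horner_prod.
rewrite [X in _ * X](eq_bigr (fun j => f k - f j)); last by move=> j _; rewrite hornerXsubC.
have [->|ki] := eqVneq k i.
  rewrite mulVf //; apply/prodf_neq0 => j; rewrite !inE => /andP[ji jS].
  by rewrite subr_eq0; apply: contra ji => /eqP /inj -> //; rewrite eqxx.
rewrite [X in _ * X](bigD1 k) /=; last by rewrite !inE ki.
by rewrite subrr mul0r mulr0.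
Qed.

Lemma interp (I : finType) (f : I -> F) (S : {set I}) (P : {poly F}) :
  {in S &, injective f} -> (size P <= #|S|)%N ->
  P = \sum_(i in S) P.[f i] *: lagp f S i.
Proof.
move=> inj sP; apply/eqP; rewrite -subr_eq0; apply/negPn/negP => nz.
have := max_poly_roots nz (rs := [seq f i | i <- enum S]).
have -> : all (root (P - \sum_(i in S) P.[f i] *: lagp f S i)) [seq f i | i <- enum S].
  apply/allP => _ /mapP[k kS ->]; rewrite mem_enum in kS.
  rewrite /root hornerD hornerN horner_sum.
  rewrite (bigD1 k) //= hornerZ lagp_eval // eqxx mulr1 big1 ?addr0 ?subrr //.
  by move=> j /andP[jS kj]; rewrite hornerZ lagp_eval // eq_sym (negbTE kj) mulr0.
rewrite map_inj_in_uniq ?enum_uniq; last by move=> x y; rewrite !mem_enum; apply: inj.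
rewrite size_map -cardE => /(_ isT isT).
apply/negP; rewrite -leqNgt; apply: leq_trans (size_polyD _ _) _.
rewrite size_polyN geq_max sP /=; apply: leq_trans (size_sum _ _ _) _.
apply/bigmax_leqP_seq => i; rewrite mem_index_enum => _ iS.
exact: leq_trans (size_scale_leq _ _) (lagp_size _ iS).
Qed.

Lemma interp_eval (I : finType) (f : I -> F) (S : {set I}) (P : {poly F}) t :
  {in S &, injective f} -> (size P <= #|S|)%N ->
  P.[t] = \sum_(i in S) (lagp f S i).[t] * P.[f i].
Proof.
move=> inj sP; rewrite {1}(interp inj sP) horner_sum.
by apply: eq_bigr => i _; rewrite hornerZ mulrC.
Qed.

End Lag.


Lemma blk_idx_inj (p a : nat) : injective (fun jx : 'I_p * 'I_a => blk_idx jx.1 jx.2).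
Proof.
move=> [j x] [j' x'] /= /(congr1 val) /= E.
have ha : (0 < a)%N by case: a x {E x'} => [[]|].
have hx := ltn_ord x; have hx' := ltn_ord x'.
have E1 : j = j' :> nat.
  by move: (congr1 (divn^~ a) E); rewrite !divnMDl // !divn_small // !addn0.
have E2 : x = x' :> nat.
  move: (congr1 (modn^~ a) E) => /=; rewrite !modnMDl !modn_small //.
by congr (_, _); apply: val_inj.
Qed.

Lemma sum_blk (R : nmodType) (p a : nat) (f : 'I_(p * a) -> R) :
  \sum_(r < p * a) f r = \sum_(j < p) \sum_(x < a) f (blk_idx j x).
Proof.
rewrite pair_big /=.
rewrite (reindex (fun jx : 'I_p * 'I_a => blk_idx jx.1 jx.2)) //=.
apply: onW_bij; apply: inj_card_bij; first exact: blk_idx_inj.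
by rewrite card_prod !card_ord.
Qed.


Lemma tensor_contract (F : fieldType) p m n r
  (u : 'I_r -> 'I_m -> 'I_p -> F) (v : 'I_r -> 'I_p -> 'I_n -> F)
  (w : 'I_r -> 'I_m -> 'I_n -> F) :
  (forall i j j' l k l', @matmul_tensor F p m n i j j' l k l' =
      \sum_(h < r) u h i j * v h j' l * w h k l') ->
  forall (a : 'I_p -> 'I_m -> F) (b : 'I_p -> 'I_n -> F) k0 l0,
  \sum_(h < r) w h k0 l0 * ((\sum_j \sum_k a j k * u h k j) *
                             (\sum_j \sum_l b j l * v h j l)) =
  \sum_j a j k0 * b j l0.
Proof.
move=> Hd a b k0 l0.
have E1 : forall h, w h k0 l0 * ((\sum_j \sum_k a j k * u h k j) *
                             (\sum_j \sum_l b j l * v h j l)) =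
   \sum_j \sum_k \sum_j' \sum_l (a j k * b j' l) * (u h k j * v h j' l * w h k0 l0).
  move=> h; rewrite big_distrl big_distrr /=; apply: eq_bigr => j _.
  rewrite big_distrl big_distrr /=; apply: eq_bigr => k _.
  rewrite big_distrr big_distrr /=; apply: eq_bigr => j' _.
  rewrite big_distrr big_distrr /=; apply: eq_bigr => l _.
  ring.
rewrite (eq_bigr _ (fun h _ => E1 h)).
rewrite exchange_big; under eq_bigr do rewrite exchange_big.
under eq_bigr do under eq_bigr do rewrite exchange_big.
under eq_bigr do under eq_bigr do under eq_bigr do rewrite exchange_big.
under eq_bigr do under eq_bigr do under eq_bigr do under eq_bigr do
  rewrite -big_distrr /= -Hd /matmul_tensor.
apply: eq_bigr => j _.
rewrite (bigD1 k0) //= [X in _ + X]big1 ?addr0; last first.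
  move=> k /negbTE nk; rewrite big1 // => j' _; rewrite big1 // => l _.
  by rewrite nk mulr0.
rewrite (bigD1 j) //= [X in _ + X]big1 ?addr0; last first.
  move=> j' /negbTE nj; rewrite big1 // => l _.
  by rewrite eq_sym nj andbF mulr0.
rewrite (bigD1 l0) //= [X in _ + X]big1 ?addr0; last first.
  by move=> l /negbTE nl; rewrite nl andbF mulr0.
by rewrite !eqxx mulr1.
Qed.


Lemma triv_decomp (F : fieldType) p m n :
  has_rank_decomp F p m n #|{: 'I_m * 'I_p * 'I_n}|.
Proof.
pose E (h : 'I_#|{: 'I_m * 'I_p * 'I_n}|) := enum_val h.
exists (fun h i j => (((E h).1.1 == i) && ((E h).1.2 == j))%:R).
exists (fun h j l => (((E h).1.2 == j) && ((E h).2 == l))%:R).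
exists (fun h k l => (((E h).1.1 == k) && ((E h).2 == l))%:R).
move=> i j j' l k l'.
rewrite /E -(big_enum_val (fun e : 'I_m * 'I_p * 'I_n =>
   ((e.1.1 == i) && (e.1.2 == j))%:R * ((e.1.2 == j') && (e.2 == l))%:R *
   ((e.1.1 == k) && (e.2 == l'))%:R : F)) /=.
rewrite (bigD1 (i, j, l)) //= big1 ?addr0.
  rewrite /matmul_tensor !eqxx /= mul1r andbT -natrM mulnb.
  by case: (i == k); case: (j == j'); case: (l == l').
move=> [[a b] c] /= ne.
case E1: (a == i); last by rewrite !mul0r.
case E2: (b == j); last by rewrite !mul0r.
case E3: (c == l); last by rewrite andbF mulr0 mul0r.
by move: ne; rewrite (eqP E1) (eqP E2) (eqP E3) eqxx.
Qed.

Lemma R_bound (F : fieldType) p m n R :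
  is_bilinear_complexity F p m n R -> (R <= m * p * n)%N.
Proof.
move=> [_ H]; have := H _ (triv_decomp F p m n).
by rewrite card_prod card_prod !card_ord.
Qed.


Lemma eqaux (V : zmodType) (c d X1 X2 : V) : (c + (d + (X2 - X1)) == X2) = (c + d == X1).
Proof.
rewrite (addrA c) (addrC (c + d)) -(addrA X2).
rewrite -{2}[X2]addr0 (inj_eq (addrI X2)) (addrC (- X1)) subr_eq0 //.
Qed.

Section Scheme.
Variables (F : finFieldType) (p m n M N R T a b c : nat).
Variables (u : 'I_R -> 'I_m -> 'I_p -> F) (v : 'I_R -> 'I_p -> 'I_n -> F)
          (w : 'I_R -> 'I_m -> 'I_n -> F).
Hypothesis Hd : forall i j j' l k l', @matmul_tensor F p m n i j j' l k l' =
      \sum_(h < R) u h i j * v h j' l * w h k l'.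
Variables (x : 'I_N -> F) (be : 'I_R -> F).
Hypothesis x_inj : injective x.
Hypothesis be_inj : injective be.
Hypothesis xbe : forall i h, x i != be h.
Hypothesis T1 : (T <= 1)%N.

Definition Idx := ('I_M * 'I_p * 'I_n)%type.
Definition Om := {ffun Idx -> F}.

Definition lB (h : 'I_R) : {poly F} := lagp be [set: 'I_R] h.
Definition Pi : {poly F} := \prod_(h < R) ('X - (be h)%:P).
Definition polyA (j : 'I_p) (k : 'I_m) : {poly F} := \sum_h u h k j *: lB h.
Definition polyB (d : 'I_M) (z : Om) (t : Idx) : {poly F} :=
  (t.1.1 == d)%:R *: \sum_h v h t.1.2 t.2 *: lB h + z t *: Pi.

Definition qry (i : 'I_N) (d : 'I_M) (z : Om) : Om := [ffun t => (polyB d z t).[x i]].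
Definition alpha (i : 'I_N) (d : 'I_M) (z : Om) (j : 'I_p) (k : 'I_m) : F :=
  (polyA j k).[x i].
Definition beta (i : 'I_N) (d : 'I_M) (z : Om) (t : 'I_T) : F := Pi.[x i].
Definition gam (q : Om) (l : 'I_M) (j : 'I_p) (k : 'I_n) : F := q (l, j, k).
Definition dec (S : {set 'I_N}) (d : 'I_M) (Qs : 'I_N -> Om) (i : 'I_N)
  (k : 'I_m) (l : 'I_n) : F := \sum_h w h k l * (lagp x S i).[be h].

Lemma lB_eval h h' : (lB h').[be h] = (h == h')%:R.
Proof. by rewrite /lB lagp_eval // ?inE // => y1 y2 _ _; apply: be_inj. Qed.

Lemma Pi_eval h : Pi.[be h] = 0.
Proof.
rewrite /Pi horner_prod (bigD1 h) //= hornerXsubC subrr mul0r //.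
Qed.

Lemma Pi_x_neq0 i : Pi.[x i] != 0.
Proof.
rewrite /Pi horner_prod; apply/prodf_neq0 => h _.
by rewrite hornerXsubC subr_eq0 xbe.
Qed.

Lemma size_lB h : (size (lB h) <= R)%N.
Proof. by have := lagp_size be (in_setT h); rewrite cardsT card_ord. Qed.

Lemma size_Pi : size Pi = R.+1.
Proof. by rewrite /Pi size_prod_XsubC -[R in RHS]card_ord cardT enumT. Qed.

Lemma size_sum_le (I : finType) (P : pred I) (G : I -> {poly F}) k :
  (forall i, P i -> size (G i) <= k)%N -> (size (\sum_(i | P i) G i)%R <= k)%N.
Proof.
move=> H; apply: leq_trans (size_sum _ _ _) _.
by apply/bigmax_leqP_seq => i _; apply: H.
Qed.

Lemma size_polyA j k : (size (polyA j k) <= R)%N.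
Proof.
apply: size_sum_le => h _; exact: leq_trans (size_scale_leq _ _) (size_lB h).
Qed.

Lemma size_polyB d z t : (size (polyB d z t) <= R.+1)%N.
Proof.
apply: leq_trans (size_polyD _ _) _; rewrite geq_max; apply/andP; split.
  apply: leq_trans (size_scale_leq _ _) _; apply: size_sum_le => h _.
  by apply: leq_trans (size_scale_leq _ _) _; apply: leq_trans (size_lB h) _.
by apply: leq_trans (size_scale_leq _ _) _; rewrite size_Pi.
Qed.


Lemma sum_lB_eval (G : 'I_R -> F) h : (\sum_h' G h' *: lB h').[be h] = G h.
Proof.
rewrite horner_sum (bigD1 h) //= hornerZ lB_eval eqxx mulr1 big1 ?addr0 //.
by move=> h' nh; rewrite hornerZ lB_eval eq_sym (negbTE nh) mulr0.
Qed.

Lemma polyA_eval h j k : (polyA j k).[be h] = u h k j.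
Proof. exact: sum_lB_eval. Qed.

Lemma polyB_eval h d z t :
  (polyB d z t).[be h] = (t.1.1 == d)%:R * v h t.1.2 t.2.
Proof. by rewrite /polyB hornerD !hornerZ Pi_eval mulr0 addr0 sum_lB_eval. Qed.

Lemma scheme_threshold K : (2 * R + T <= K)%N ->
  achieves_threshold a b c qry alpha beta gam dec K.
Proof.
move=> hK S hS d z Z A B k0 l0.
apply/matrixP => y zz.
pose PA x0 := \sum_j \sum_k A (blk_idx j x0) (blk_idx k y) *: polyA j k
              + \sum_t Z t x0 y *: Pi.
pose PB x0 := \sum_l \sum_j \sum_k (B l) (blk_idx j x0) (blk_idx k zz) *: polyB d z (l, j, k).
pose PP := \sum_x0 PA x0 * PB x0.
have Hres i : result qry alpha beta gam i d z Z A B y zz = PP.[x i].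
  rewrite /result !mxE /PP horner_sum; apply eq_bigr => x0 _.
  rewrite hornerM; congr (_ * _).
    rewrite /codedA !(mxE, summxE) /PA hornerD !horner_sum; congr (_ + _).
      apply: eq_bigr => j _; rewrite summxE horner_sum.
      by apply: eq_bigr => k _; rewrite !mxE hornerZ mulrC.
    by apply: eq_bigr => t _; rewrite !mxE hornerZ mulrC.
  rewrite /codedB !(mxE, summxE) /PB horner_sum; apply: eq_bigr => l _.
  rewrite !(mxE, summxE) horner_sum; apply: eq_bigr => j _.
  rewrite !(mxE, summxE) horner_sum; apply: eq_bigr => k _.
  by rewrite !mxE hornerZ /gam /qry ffunE mulrC.
have HszA x0 : (size (PA x0) <= R + T)%N.
  apply: leq_trans (size_polyD _ _) _; rewrite geq_max; apply/andP; split.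
    apply: size_sum_le => j _; apply: size_sum_le => k _.
    apply: leq_trans (size_scale_leq _ _) _; apply: leq_trans (size_polyA j k) _.
    exact: leq_addr.
  have [T0|TP] := eqVneq T 0%N.
    rewrite big1 ?size_poly0 // => t; have := ltn_ord t; by rewrite {2}T0.
  apply: size_sum_le => t _; apply: leq_trans (size_scale_leq _ _) _.
  rewrite size_Pi; lia.
have HszB x0 : (size (PB x0) <= R.+1)%N.
  apply: size_sum_le => l _; apply: size_sum_le => j _; apply: size_sum_le => k _.
  exact: leq_trans (size_scale_leq _ _) (size_polyB _ _ _).
have HszP : (size PP <= #|S|)%N.
  rewrite hS; apply: size_sum_le => x0 _.
  apply: leq_trans (size_polyMleq _ _) _.
  have := HszA x0; have := HszB x0; lia.
have HPA h x0 : (PA x0).[be h] =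
    \sum_j \sum_k A (blk_idx j x0) (blk_idx k y) * u h k j.
  rewrite hornerD !horner_sum [X in _ + X]big1 ?addr0; last first.
    by move=> t _; rewrite hornerZ Pi_eval mulr0.
  apply: eq_bigr => j _; rewrite horner_sum; apply: eq_bigr => k _.
  by rewrite hornerZ polyA_eval.
have HPB h x0 : (PB x0).[be h] =
    \sum_j \sum_l (B d) (blk_idx j x0) (blk_idx l zz) * v h j l.
  rewrite horner_sum (bigD1 d) //= [X in _ + X]big1 ?addr0.
    rewrite horner_sum; apply: eq_bigr => j _; rewrite horner_sum.
    by apply: eq_bigr => k _; rewrite hornerZ polyB_eval /= eqxx mul1r.
  move=> l nl; rewrite horner_sum big1 // => j _; rewrite horner_sum big1 // => k _.
  by rewrite hornerZ polyB_eval /= (negbTE nl) mul0r mulr0.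
have xinjS : {in S &, injective x} by move=> i1 i2 _ _; apply: x_inj.
rewrite summxE.
transitivity (\sum_h w h k0 l0 * PP.[be h]); last first.
  rewrite (eq_bigr (fun i => \sum_h w h k0 l0 * ((lagp x S i).[be h] * PP.[x i])));
    last first.
    move=> i _; rewrite mxE Hres /dec big_distrl /=.
    by apply: eq_bigr => h _; rewrite mulrA.
  rewrite exchange_big /=; apply: eq_bigr => h _.
  by rewrite -big_distrr /= -interp_eval.
under eq_bigr do rewrite /PP horner_sum big_distrr /=.
rewrite exchange_big /=.
under eq_bigr do under eq_bigr do rewrite hornerM HPA HPB.
rewrite !mxE sum_blk exchange_big /=; apply: eq_bigr => x0 _.
rewrite (tensor_contract Hd (fun j k => A (blk_idx j x0) (blk_idx k y))
          (fun j l => B d (blk_idx j x0) (blk_idx l zz))).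
by apply: eq_bigr => j _; rewrite !mxE.
Qed.


Lemma qry_eval i d z t :
  qry i d z t = (t.1.1 == d)%:R * (\sum_h v h t.1.2 t.2 *: lB h).[x i] + z t * Pi.[x i].
Proof. by rewrite /qry ffunE /polyB hornerD !hornerZ. Qed.

Lemma scheme_private : is_private n a b c qry alpha beta.
Proof.
move=> i; apply: perm_indep => d1 d2.
pose g (t : Idx) := (\sum_h v h t.1.2 t.2 *: lB h).[x i].
pose sh (d0 : 'I_M) (z : Om) : Om := [ffun t => z t + (Pi.[x i])^-1 *
   (((t.1.1 == d0)%:R - (t.1.1 == tperm d1 d2 d0)%:R) * g t)].
exists (fun s => (((tperm d1 d2 (sD s), sh (sD s) (sW s)), sZ s), sA s, sB s)).
split.
  move=> [[[[e1 z1] Z1] A1] B1] [[[[e2 z2] Z2] A2] B2]; rewrite /sD /sW /sZ /sA /sB /= => -[E1 E2 -> -> ->].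
  have ee : e1 = e2 by apply: (perm_inj E1).
  subst e2; congr (_, _, _, _, _); apply/ffunP => t.
  by move/ffunP: E2 => /(_ t); rewrite !ffunE => /addIr.
move=> [[[[e z] Z] A] B]; split; last first.
  by rewrite /sD /= -[X in _ == X](tpermL d1 d2) (inj_eq perm_inj).
rewrite /worker_view /sD /sW /sZ /sA /sB /=; congr (_, _, _).
apply/ffunP => t; rewrite !qry_eval ffunE -/(g t).
have P0 := Pi_x_neq0 i.
by rewrite mulrDl mulrAC mulVf // mul1r; ring.
Qed.

Lemma scheme_secure : T = 1%N -> is_secure n a b c alpha beta.
Proof.
move=> hT i; apply: perm_indep => X1 X2.
pose sh (Z : Keys F a b T) : Keys F a b T :=
  [ffun t => Z t + (Pi.[x i])^-1 *: (X2 - X1)].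
exists (fun s => (((sD s, sW s), sh (sZ s)), sA s, sB s)).
split.
  move=> [[[[e1 z1] Z1] A1] B1] [[[[e2 z2] Z2] A2] B2]; rewrite /sD /sW /sZ /sA /sB /= => -[-> -> E -> ->].
  congr (_, _, _, _, _); apply/ffunP => t.
  by move/ffunP: E => /(_ t); rewrite !ffunE => /addIr.
move=> [[[[e z] Z] A] B]; split => //.
rewrite /sD /sW /sZ /sA /sB /= /codedA.
have -> : \sum_(t < T) beta i e z t *: sh Z t =
          \sum_(t < T) beta i e z t *: Z t + (X2 - X1).
  rewrite (eq_bigr (fun t => beta i e z t *: Z t + (X2 - X1))); last first.
    move=> t _; rewrite ffunE scalerDr scalerA /beta mulfV ?scale1r //.
    exact: Pi_x_neq0.
  by rewrite big_split /= sumr_const card_ord; congr (_ + _); rewrite hT.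
exact: eqaux.
Qed.

Lemma scheme_exists_private : T = 0%N -> exists_private_scheme F p m n M N a b c (2 * R).
Proof.
move=> T0; exists Om, T, Om, qry, alpha, beta, gam, dec; split.
  by apply/card_gt0P; exists [ffun=> 0].
split; last exact: scheme_private.
by apply: scheme_threshold; rewrite T0 addn0.
Qed.

Lemma scheme_exists_secure : T = 1%N ->
  exists_private_secure_scheme F p m n M N a b c (2 * R + 1).
Proof.
move=> Te; exists Om, T, Om, qry, alpha, beta, gam, dec; split.
  by apply/card_gt0P; exists [ffun=> 0].
split; first by apply: scheme_threshold; rewrite Te.
split; first exact: scheme_private.
exact: scheme_secure.
Qed.

End Scheme.


Local Close Scope ring_scope.

Theorem theorem2 :
  forall p m n M N : nat,
    (0 < p)%N -> (0 < m)%N -> (0 < n)%N -> (0 < M)%N ->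
    exists q0 : nat,
      forall F : finFieldType, (q0 <= #|F|)%N ->
      forall a b c R : nat,
        is_bilinear_complexity F p m n R ->
        exists_private_scheme F p m n M N a b c (2 * R) /\
        exists_private_secure_scheme F p m n M N a b c (2 * R + 1).
Proof.
move=> p m n M N hp hm hn hM.
exists (N + m * p * n)%N => F hF a b c R hR.
have hRb := R_bound hR.
case: hR => [[u [v [w Hd]]] _].
pose e := enum F.
have se : size e = #|F| by rewrite cardE.
have ue : uniq e := enum_uniq _.
pose x (i : 'I_N) := nth 0%R e i.
pose be (h : 'I_R) := nth 0%R e (N + h).
have x_inj : injective x.
  move=> i1 i2 /eqP; rewrite /x nth_uniq // ?se.
  - by move/eqP/val_inj.
  - have := ltn_ord i1; lia.
  - have := ltn_ord i2; lia.
have be_inj : injective be.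
  move=> i1 i2 /eqP; rewrite /be nth_uniq // ?se.
  - by rewrite eqn_add2l => /eqP/val_inj.
  - have := ltn_ord i1; lia.
  - have := ltn_ord i2; lia.
have xbe i h : x i != be h.
  rewrite /x /be nth_uniq // ?se.
  - have := ltn_ord i; lia.
  - have := ltn_ord i; lia.
  - have := ltn_ord h; lia.
split.
  exact: (@scheme_exists_private F p m n M N R 0 a b c u v w Hd x be x_inj be_inj xbe).
exact: (@scheme_exists_secure F p m n M N R 1 a b c u v w Hd x be x_inj be_inj xbe).
Qed.
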